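(* Let $C\in\mathcal C_n$, $A=\Xi^{-1}(C)$, and let $L$ be the $n\times n$ matrix with $L_{ij}=\sum_{k=1}^n kA_{i,j,k}$. Let $\Sigma(L)_{i,j}=\sum_{a=1}^i\sum_{b=1}^j L_{ab}$ and $\rho(C)=\sum_{0\le i,j,k\le n}C_{i,j,k}$. Then $$\rho(C)+\sum_{1\le i,j\le n}\Sigma(L)_{i,j}=\frac{n^2(n+1)^3}{4}.$$
   Context: Let $[n]=\{1,\dots,n\}$, $[0,n]=\{0,\dots,n\}$. A corner-sum hypermatrix of order $n$ is an integer array $C=(C_{i,j,k})_{i,j,k\in[0,n]}$ such that for all $i,j\in[0,n]$: $C_{i,j,0}=C_{i,0,j}=C_{0,i,j}=0$, $C_{i,j,n}=C_{i,n,j}=C_{n,i,j}=ij$, and for all $k\in[n]$ each of $C_{i,j,k}-C_{i,j,k-1}$, $C_{i,k,j}-C_{i,k-1,j}$, $C_{k,i,j}-C_{k-1,i,j}$ is an integer in $\{\max(0,i+j-n),\dots,\min(i,j)\}$; $\mathcal C_n$ is the set of these. For an array $C$ indexed by $[0,n]^3$, $\Xi^{-1}(C)$ is the array indexed by $[n]^3$ with $\Xi^{-1}(C)_{i,j,k}=C_{i,j,k}-C_{i-1,j,k}-C_{i,j-1,k}-C_{i,j,k-1}+C_{i-1,j-1,k}+C_{i-1,j,k-1}+C_{i,j-1,k-1}-C_{i-1,j-1,k-1}$. *)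

(* Defs.v *)
From mathcomp Require Import all_boot all_order all_algebra.
Set Implicit Arguments. Unset Strict Implicit. Unset Printing Implicit Defensive.
Import Order.TTheory GRing.Theory Num.Theory.
Local Open Scope ring_scope.

(* A 3-dimensional integer array indexed by [0,n]^3 is represented as a
   function nat -> nat -> nat -> int; only the values at indices in [0,n]
   matter for everything below. *)
Definition arr3 := nat -> nat -> nat -> int.

Definition in_range (n i j : nat) (d : int) : bool :=
  ((i + j - n)%N%:Z <= d) && (d <= (minn i j)%:Z).

Definition is_corner_sum (n : nat) (C : arr3) : Prop :=
  (forall i j : nat, (i <= n)%N -> (j <= n)%N ->
     [/\ C i j 0%N = 0, C i 0%N j = 0 & C 0%N i j = 0] /\
     [/\ C i j n = (i * j)%N%:Z, C i n j = (i * j)%N%:Z & C n i j = (i * j)%N%:Z]) /\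
  (forall i j k : nat, (i <= n)%N -> (j <= n)%N -> (1 <= k <= n)%N ->
     [/\ in_range n i j (C i j k - C i j k.-1),
         in_range n i j (C i k j - C i k.-1 j) &
         in_range n i j (C k i j - C k.-1 i j)]).

(* Xi^{-1}(C), indexed by [n]^3 (i, j, k >= 1) *)
Definition Xi_inv (C : arr3) : arr3 := fun i j k =>
  C i j k - C i.-1 j k - C i j.-1 k - C i j k.-1
  + C i.-1 j.-1 k + C i.-1 j k.-1 + C i j.-1 k.-1 - C i.-1 j.-1 k.-1.

Definition Lmat (n : nat) (A : arr3) (i j : nat) : int :=
  \sum_(1 <= k < n.+1) (k%:Z * A i j k).

Definition SigmaL (L : nat -> nat -> int) (i j : nat) : int :=
  \sum_(1 <= a < i.+1) \sum_(1 <= b < j.+1) L a b.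

Definition rho (n : nat) (C : arr3) : int :=
  \sum_(0 <= i < n.+1) \sum_(0 <= j < n.+1) \sum_(0 <= k < n.+1) C i j k.

(* Main.v *)
Require Import Defs.
From mathcomp Require Import all_boot all_order all_algebra.
From mathcomp Require Import ring lra zify.
Import GRing.Theory Num.Theory.
Local Open Scope ring_scope.

Lemma tel1 (f : nat -> int) m :
  \sum_(1 <= k < m.+1) (f k - f k.-1) = f m - f 0%N.
Proof.
elim: m => [|m IH]; first by rewrite big_geq // subrr.
rewrite big_nat_recr //= IH; ring.
Qed.

Lemma abel (g : nat -> int) m :
  \sum_(1 <= k < m.+1) (k%:Z * (g k - g k.-1)) = m%:Z * g m - \sum_(0 <= k < m) g k.
Proof.
elim: m => [|m IH]; first by rewrite !big_geq // mul0r subrr.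
rewrite big_nat_recr //= IH big_nat_recr //= -addn1 PoszD; ring.
Qed.

Lemma tel2 (h : nat -> nat -> int) i j :
  \sum_(1 <= a < i.+1) \sum_(1 <= b < j.+1)
     (h a b - h a.-1 b - h a b.-1 + h a.-1 b.-1)
  = h i j - h 0%N j - h i 0%N + h 0%N 0%N.
Proof.
have e : forall a, \sum_(1 <= b < j.+1) (h a b - h a.-1 b - h a b.-1 + h a.-1 b.-1)
   = (h a j - h a 0%N) - (h a.-1 j - h a.-1 0%N).
  move=> a; have := tel1 (fun b => h a b - h a.-1 b) j; rewrite /= => E.
  have -> : h a j - h a 0%N - (h a.-1 j - h a.-1 0%N) =
     h a j - h a.-1 j - (h a 0%N - h a.-1 0%N) by ring.
  rewrite -E; by apply: eq_bigr => b _; ring.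
rewrite (eq_bigr _ (fun a _ => e a)).
have := tel1 (fun a => h a j - h a 0%N) i; rewrite /= => ->; ring.
Qed.

Definition Ecs (C : arr3) a b k :=
  C a b k - C a.-1 b k - C a b.-1 k + C a.-1 b.-1 k.

Lemma tel2C (C : arr3) k i j :
  \sum_(1 <= a < i.+1) \sum_(1 <= b < j.+1) Ecs C a b k
  = C i j k - C 0%N j k - C i 0%N k + C 0%N 0%N k.
Proof. exact: (tel2 (fun a b => C a b k) i j). Qed.

Lemma step1 n (C : arr3) a b :
  Lmat n (Xi_inv C) a b = n%:Z * Ecs C a b n - \sum_(0 <= k < n) Ecs C a b k.
Proof.
rewrite /Lmat -(abel (Ecs C a b)); apply: eq_bigr => k _.
by rewrite /Xi_inv /Ecs; congr (_ * _); ring.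
Qed.

Lemma gauss n : 2 * \sum_(1 <= i < n.+1) (i%:Z) = (n * n.+1)%N%:Z.
Proof.
elim: n => [|n IH]; first by rewrite big_geq.
rewrite big_nat_recr //= mulrDr IH -!PoszM -PoszD; congr Posz; lia.
Qed.

Theorem mainTheorem14 (n : nat) (C : arr3) :
  is_corner_sum n C ->
  ((rho n C + \sum_(1 <= i < n.+1) \sum_(1 <= j < n.+1)
                 SigmaL (Lmat n (Xi_inv C)) i j)%:~R : rat)
  = ((n ^ 2 * n.+1 ^ 3)%N%:R / 4%:R : rat).
Proof.
move=> [Hb _].
have z0 : forall i j k, (i <= n)%N -> (j <= n)%N -> (k <= n)%N ->
   [/\ C i j 0%N = 0, C i 0%N k = 0 & C 0%N j k = 0].
  move=> i j k Hi Hj Hk; split.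
  - by have [[]] := Hb i j Hi Hj.
  - by have [[]] := Hb i k Hi Hk.
  - by have [[]] := Hb j k Hj Hk.
have Cn : forall i j, (i <= n)%N -> (j <= n)%N -> C i j n = (i * j)%N%:Z.
  by move=> i j Hi Hj; have [_ []] := Hb i j Hi Hj.
have step2 : forall i j, (i <= n)%N -> (j <= n)%N ->
   SigmaL (Lmat n (Xi_inv C)) i j = n%:Z * C i j n - \sum_(0 <= k < n) C i j k.
  move=> i j Hi Hj; rewrite /SigmaL.
  under eq_bigr => a _ do under eq_bigr => b _ do rewrite step1.
  under eq_bigr => a _ do rewrite sumrB.
  rewrite sumrB.
  under eq_bigr => a _ do rewrite -mulr_sumr.
  rewrite -mulr_sumr tel2C.
  rewrite (eq_bigr (fun a => \sum_(0 <= k < n) \sum_(1 <= b < j.+1) Ecs C a b k));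
    last by move=> a _; rewrite exchange_big.
  rewrite exchange_big /=.
  under eq_big_nat => k /andP[_ Hk] do rewrite tel2C.
  have [_ _ ->] := z0 i j n Hi Hj (leqnn n).
  have [_ -> _] := z0 i j n Hi Hj (leqnn n).
  have [_ _ ->] := z0 i 0%N n Hi (leq0n n) (leqnn n).
  congr (_ - _); first by ring.
  apply: eq_big_nat => k /andP[_ Hk].
  have [_ _ ->] := z0 i j k Hi Hj (ltnW Hk).
  have [_ -> _] := z0 i j k Hi Hj (ltnW Hk).
  have [_ _ ->] := z0 i 0%N k Hi (leq0n n) (ltnW Hk).
  ring.
set s := \sum_(1 <= i < n.+1) (i%:Z).
have key : rho n C + \sum_(1 <= i < n.+1) \sum_(1 <= j < n.+1)
                 SigmaL (Lmat n (Xi_inv C)) i j = n.+1%:Z * (s * s).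
  under eq_big_nat => i /andP[_ Hi] do under eq_big_nat => j /andP[_ Hj] do
    rewrite step2 //.
  rewrite /rho [X in X + _]big_ltn // [X in X + _ + _](_ : _ = 0) ?add0r; last first.
    rewrite big_nat big1 // => j /andP[_ Hj]; rewrite big_nat big1 // => k /andP[_ Hk].
    by have [_ _ ->] := z0 0%N j k (leq0n n) Hj Hk.
  rewrite -big_split /= /s mulr_suml mulr_sumr.
  apply: eq_big_nat => i /andP[Hi1 Hi].
  rewrite [X in X + _]big_ltn // [X in X + _ + _](_ : _ = 0) ?add0r; last first.
    rewrite big_nat big1 // => k /andP[_ Hk].
    by have [_ -> _] := z0 i 0%N k Hi (leq0n n) Hk.
  rewrite -big_split /= mulr_sumr mulr_sumr.
  apply: eq_big_nat => j /andP[Hj1 Hj].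
  rewrite big_nat_recr //= Cn // PoszM; ring.
have g := gauss n.
have key4 : 4 * (rho n C + \sum_(1 <= i < n.+1) \sum_(1 <= j < n.+1)
                 SigmaL (Lmat n (Xi_inv C)) i j) = (n ^ 2 * n.+1 ^ 3)%N%:Z.
  rewrite key.
  have -> : 4 * (n.+1%:Z * (s * s)) = n.+1%:Z * ((2 * s) * (2 * s)) by ring.
  rewrite g -!PoszM; congr Posz; rewrite !expnS expn0; ring.
move: key4; set X := (rho n C + _) => k4.
have h : (((4 * X)%:~R : rat)) = (n ^ 2 * n.+1 ^ 3)%N%:R by rewrite k4.
rewrite -h intrM.
have h4 : ((4 : int)%:~R : rat) = 4%:R by [].
by rewrite h4; field.
Qed.
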